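(* Let $n>2k$, $k\ge t+3$, and let $\mathcal F\subseteq\binom{[n]}{k}$ be a maximal $t$-intersecting family with $\tau_t(\mathcal F)=t+2$ and $\tau_t(\mathcal T_t(\mathcal F))=t$. If $|\mathcal T_t(\mathcal F)|=(k-t)(k-t+1)+1$, then: (i) $\mathcal F$ is a Type I family; (ii) $|\mathcal F|>((k-t)(k-t+1)+1)\binom{n-t-2}{k-t-2}-(k-t)(2(k-t)^2+1)\binom{n-t-3}{k-t-3}$.
   Context: A family is $t$-intersecting if any two members meet in at least $t$ elements. A $t$-cover of a family $\mathcal G$ (of subsets of $[n]$) is a set $S\subseteq[n]$ with $|S\cap G|\ge t$ for all $G\in\mathcal G$; $\tau_t(\mathcal G)$ is the minimum size of a $t$-cover, and $\mathcal T_t(\mathcal G)$ is the set of all $t$-covers of $\mathcal G$ of size $\tau_t(\mathcal G)$. A $t$-intersecting $\mathcal F\subseteq\binom{[n]}{k}$ is maximal if no $t$-intersecting subfamily of $\binom{[n]}{k}$ properly contains it. Type I family: choose $T,A\in\binom{[n]}{t}$ and $B,C\in\binom{[n]}{k-t}$ with $|T\cap A|=t-1$, $T\cap(B\cup C)=\emptyset$, and $A,B,C$ pairwise disjoint; choose $u\in C$; put $G_1=A\cup B$, $G_2=A\cup C$, $G_3=(T\cap A)\cup B\cup\{u\}$. The family is $\{F\in\binom{[n]}{k}: F\cap(A\cup T)=T,\ F\cap B\ne\emptyset,\ F\cap C\neq\emptyset\}\cup\{F\in\binom{[n]}{k}: A\cup T\subseteq F,\ F\cap(B\cup\{u\})\neq\emptyset\}\cup\{G_1,G_2,G_3\}$.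 *)

(* Defs.v *)
From mathcomp Require Import all_boot all_order all_algebra.
Set Implicit Arguments. Unset Strict Implicit. Unset Printing Implicit Defensive.

Definition kuniform (n k : nat) (F : {set {set 'I_n}}) : Prop :=
  forall A, A \in F -> #|A| = k.

Definition t_intersecting (n t : nat) (F : {set {set 'I_n}}) : Prop :=
  forall A B, A \in F -> B \in F -> t <= #|A :&: B|.

Definition maximal_tint (n k t : nat) (F : {set {set 'I_n}}) : Prop :=
  [/\ kuniform k F, t_intersecting t F &
      forall G : {set {set 'I_n}}, kuniform k G -> t_intersecting t G ->
        F \subset G -> G = F].

Definition tcover (n t : nat) (G : {set {set 'I_n}}) (S : {set 'I_n}) : bool :=
  [forall A in G, t <= #|S :&: A|].

(* tau_t(G): minimum size of a t-cover (n.+1 if no t-cover exists; this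
   default is never used in the statement since covers exist there). *)
Definition tau (n t : nat) (G : {set {set 'I_n}}) : nat :=
  \big[minn/n.+1]_(S : {set 'I_n} | tcover t G S) #|S|.

Definition Tcov (n t : nat) (G : {set {set 'I_n}}) : {set {set 'I_n}} :=
  [set S | tcover t G S & #|S| == tau t G].

Definition typeI_family (n k : nat) (T A B C : {set 'I_n}) (u : 'I_n)
  : {set {set 'I_n}} :=
  [set F : {set 'I_n} | (#|F| == k) &&
     [|| [&& F :&: (A :|: T) == T, F :&: B != set0 & F :&: C != set0],
         (A :|: T \subset F) && (F :&: (u |: B) != set0),
         F == A :|: B, F == A :|: C | F == (T :&: A) :|: (u |: B)]].

Definition is_typeI (n k t : nat) (F : {set {set 'I_n}}) : Prop :=
  exists (T A B C : {set 'I_n}) (u : 'I_n),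
    [/\ #|T| = t, #|A| = t, #|B| = k - t, #|C| = k - t & #|T :&: A| = t - 1]
    /\ [/\ T :&: (B :|: C) = set0, A :&: B = set0, A :&: C = set0,
            B :&: C = set0 & u \in C]
    /\ F = typeI_family k T A B C u.

(* Main.v *)
Require Import Defs.
From mathcomp Require Import all_boot all_order all_algebra.
From mathcomp Require Import zify.
Set Implicit Arguments. Unset Strict Implicit. Unset Printing Implicit Defensive.

Lemma tcoverP n t (G : {set {set 'I_n}}) S :
  reflect (forall A, A \in G -> t <= #|S :&: A|) (tcover t G S).
Proof. exact: (iffP forall_inP). Qed.

Lemma tau_le n t (G : {set {set 'I_n}}) S : tcover t G S -> tau t G <= #|S|.
Proof.
move=> HS; rewrite /tau.
elim: (index_enum _) (mem_index_enum S) => [//|i s IH].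
rewrite inE big_cons => /orP[/eqP<-|Ss]; first by rewrite HS geq_minl.
case: ifP => _; last exact: IH.
exact: leq_trans (geq_minr _ _) (IH Ss).
Qed.

Lemma tau_attained n t (G : {set {set 'I_n}}) : tau t G <= n ->
  exists S, tcover t G S /\ #|S| = tau t G.
Proof.
rewrite /tau.
pose P x := x = n.+1 \/ exists S, tcover t G S /\ #|S| = x.
have : P (\big[minn/n.+1]_(S | tcover t G S) #|S|).
  apply: big_ind => [|x y Hx Hy|S HS]; [by left| |by right; exists S].
  by rewrite /minn; case: ifP.
by case=> [->|//]; rewrite ltnn.
Qed.

Lemma card2_eq (T : finType) (e : {set T}) x y :
  #|e| = 2 -> x \in e -> y \in e -> x != y -> e = [set x; y].
Proof.
move=> He hx hy xy; apply/eqP; rewrite eq_sym eqEcard subUset !sub1set hx hy.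
by rewrite cards2 xy He.
Qed.

Lemma card_bigcup_seq (I T : finType) (s : seq I) (f : I -> {set T}) :
  #|\big[@setU T/set0]_(j <- s) f j| <= \sum_(j <- s) #|f j|.
Proof.
elim: s => [|j s IH]; first by rewrite !big_nil cards0.
rewrite !big_cons; apply: leq_trans (leq_card_setU _ _) _.
by rewrite leq_add2l.
Qed.

Lemma card_bigcup_le (I T : finType) (J : {set I}) (f : I -> {set T}) :
  #|\bigcup_(j in J) f j| <= \sum_(j in J) #|f j|.
Proof. by rewrite -!big_enum; apply: card_bigcup_seq. Qed.

Lemma card_bigcup_disj (I T : finType) (J : {set I}) (f : I -> {set T}) :
  {in J &, forall i j, i != j -> [disjoint f i & f j]} ->
  \sum_(j in J) #|f j| = #|\bigcup_(j in J) f j|.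
Proof.
move=> Hd; rewrite -!big_enum.
have : {subset enum J <= J} by move=> x; rewrite mem_enum.
have : uniq (enum J) by apply: enum_uniq.
elim: (enum J) => [|j s IH] /=; first by rewrite !big_nil cards0.
move=> /andP[js us] Hs; rewrite !big_cons IH //; last by move=> x xs; apply: Hs; rewrite inE xs orbT.
rewrite cardsU.
suff -> : f j :&: \big[@setU T/set0]_(i <- s) f i = set0 by rewrite cards0 subn0.
apply/eqP; rewrite setI_eq0.
have jJ : j \in J by apply: Hs; rewrite inE eqxx.
clear IH. elim: s js us Hs => [|i s' IH'] /=; first by rewrite big_nil -setI_eq0 setI0.
rewrite inE negb_or big_cons => /andP[ji js'] /andP[_ us'] Hs.
rewrite -setI_eq0 setIUr setU_eq0 !setI_eq0; apply/andP; split.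
  apply: Hd => //; apply: Hs; by rewrite !inE eqxx orbT.
apply: IH' => // x; rewrite !inE => /orP[/eqP->|xs].
  by apply: Hs; rewrite !inE eqxx.
by apply: Hs; rewrite !inE xs !orbT.
Qed.

Lemma bin_sub_bound N r z : 0 < r -> 'C(N, r) <= 'C(N - z, r) + z * 'C(N.-1, r.-1).
Proof.
case: r => // r _ /=.
elim: z => [|z IH]; first by rewrite subn0 mul0n addn0.
apply: leq_trans IH _; rewrite mulSn addnA leq_add2r.
case E: (N - z) => [|m].
  by rewrite bin0n /=.
have -> : N - z.+1 = m by rewrite subnS E.
rewrite binS leq_add2l; apply: leq_bin2l; lia.
Qed.

Lemma bin2_lt s : 2 <= s -> 'C(s.+2, 2) < s * s.+1 + 1.
Proof. by move=> hs; rewrite bin2 -divn2 /=; nia. Qed.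

Definition Sup {n} (k : nat) (P Z : {set 'I_n}) : {set {set 'I_n}} :=
  [set X : {set 'I_n} | [&& #|X| == k, P \subset X & [disjoint X & Z]]].

Lemma card_sup n k (P Z : {set 'I_n}) : [disjoint P & Z] -> #|P| <= k ->
  'C(n - #|P| - #|Z|, k - #|P|) <= #|Sup k P Z|.
Proof.
move=> dPZ Pk.
set D := ~: (P :|: Z).
have cD : #|D| = n - #|P| - #|Z|.
  have := cardsC (P :|: Z); rewrite card_ord cardsU.
  move: dPZ; rewrite -setI_eq0 => /eqP ->; rewrite cards0 subn0 -/D; lia.
rewrite -cD -cards_draws.
rewrite -(card_in_imset (f := fun Y => P :|: Y)); last first.
  move=> Y1 Y2; rewrite !inE => /andP[s1 _] /andP[s2 _] E.
  have key : forall Y : {set 'I_n}, Y \subset D -> Y = (P :|: Y) :\: P.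
    move=> Y sY; apply/setP => x; rewrite !inE.
    case xY: (x \in Y); case xP: (x \in P) => //=.
    by move/subsetP: sY => /(_ x xY); rewrite !inE xP.
  by rewrite (key _ s1) (key _ s2) E.
apply: subset_leq_card; apply/subsetP => X /imsetP[Y HY ->]; move: HY; rewrite !inE => /andP[sY cY].
rewrite subsetUl /=; apply/andP; split.
  rewrite cardsU.
  have -> : P :&: Y = set0.
    apply/setP => x; rewrite !inE; case xP: (x \in P) => //=.
    by apply/negP => /(subsetP sY); rewrite !inE xP.
  rewrite cards0 subn0 (eqP cY); apply/eqP; lia.
rewrite -setI_eq0 setIUl setU_eq0; apply/andP; split; first by rewrite setI_eq0.
apply/eqP/setP => x; rewrite !inE; case xY: (x \in Y) => //=.
by move/subsetP: sY => /(_ x xY); rewrite !inE negb_or => /andP[_ /negbTE ->].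
Qed.

Lemma edge_form (T : finType) (e W : {set T}) v :
  #|e| = 2 -> v \in e -> v \notin W -> e :&: W != set0 ->
  exists2 y, y \in W & e = [set v; y].
Proof.
move=> ce ve vW /set0Pn[y]; rewrite inE => /andP[ye yW].
exists y => //; apply: card2_eq => //.
by apply: contraNneq vW => ->.
Qed.

Lemma deg_bound (T : finType) (Es : {set {set T}}) W v s :
  (forall e, e \in Es -> #|e| = 2 /\ e :&: W != set0) -> #|W| = s -> v \notin W ->
  #|[set e in Es | v \in e]| <= s.
Proof.
move=> HE cW vW; rewrite -cW.
apply: leq_trans (leq_imset_card (fun y => [set v; y]) W).
apply: subset_leq_card; apply/subsetP => e; rewrite inE => /andP[eE ve].
have [ce ceW] := HE e eE.
have [y yW ->] := edge_form ce ve vW ceW.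
by apply: imset_f.
Qed.

Lemma pair_bound (T : finType) (s : nat) (Ws Es : {set {set T}}) W1 W2 :
  (forall W, W \in Ws -> #|W| = s.+1) ->
  (forall v, exists2 W, W \in Ws & v \notin W) ->
  (forall e, e \in Es -> #|e| = 2 /\ forall W, W \in Ws -> e :&: W != set0) ->
  W1 \in Ws -> W2 \in Ws ->
  #|Es| <= #|W1 :&: W2| * s.+1 + (s.+1 - #|W1 :&: W2|) * (s.+1 - #|W1 :&: W2|).
Proof.
move=> HW Hv HE W1in W2in.
set I := W1 :&: W2.
set Y := [set [set p.1; p.2] | p in setX (W1 :\: W2) (W2 :\: W1)].
have sub : Es \subset (\bigcup_(v in I) [set e in Es | v \in e]) :|: Y.
  apply/subsetP => e eE; have [ce cW] := HE e eE.
  rewrite inE; case: (boolP (e :&: I == set0)) => [/eqP eI|/set0Pn[v]].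
  - apply/orP; right.
    have /set0Pn[x] := cW W1 W1in; rewrite inE => /andP[xe xW1].
    have /set0Pn[y] := cW W2 W2in; rewrite inE => /andP[ye yW2].
    have xW2 : x \notin W2.
      apply/negP => xW2; have : x \in e :&: I by rewrite !inE xe xW1 xW2.
      by rewrite eI inE.
    have yW1 : y \notin W1.
      apply/negP => yW1; have : y \in e :&: I by rewrite !inE ye yW1 yW2.
      by rewrite eI inE.
    have xy : x != y by apply: contraNneq xW2 => ->.
    rewrite (card2_eq ce xe ye xy); apply/imsetP; exists (x, y) => //.
    by rewrite !inE xW1 xW2 yW2 yW1.
  - rewrite inE => /andP[ve vI]; apply/orP; left; apply/bigcupP; exists v => //.
    by rewrite inE eE ve.
apply: leq_trans (subset_leq_card sub) _.
apply: leq_trans (leq_card_setU _ _) _.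
apply: leq_add.
  apply: leq_trans (card_bigcup_le _ _) _.
  rewrite -sum_nat_const; apply: leq_sum => v vI.
  have [W Win vW] := Hv v.
  apply: (deg_bound (W:=W)) => //; last exact: HW.
  by move=> e eE; have [c h] := HE e eE; split => //; apply: h.
apply: leq_trans (leq_imset_card _ _) _.
by rewrite cardsX !cardsD (HW _ W1in) (HW _ W2in) (setIC W2 W1).
Qed.

Lemma add_one (T : finType) (X W : {set T}) :
  X \subset W -> #|W| = #|X|.+1 -> exists2 u, u \notin X & W = u |: X.
Proof.
move=> h cW.
have : #|W :\: X| == 1 by rewrite cardsD (setIidPr h) cW subSnn.
case/cards1P => u Eu; exists u.
  have : u \in W :\: X by rewrite Eu inE.
  by rewrite inE => /andP[].
apply/setP => x; rewrite !inE; case xX: (x \in X); first by rewrite orbT (subsetP h).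
rewrite orbF; have := f_equal (fun S : {set T} => x \in S) Eu; by rewrite !inE xX.
Qed.

Lemma no_case_arith s i : 2 < s -> 0 < i -> i != 1 -> i <= s ->
  s * s.+1 + 1 <= i * s.+1 + (s.+1 - i) * (s.+1 - i) -> i = s.
Proof.
move=> s2 i1 i2 i3 hb.
case: (ltngtP i s) => // his; last by lia.
exfalso.
have [d Ed] : exists d, s = i + d.+1 by exists (s - i).-1; lia.
subst s.
move: hb; have -> : (i + d.+1).+1 - i = d.+2 by lia.
nia.
Qed.

Lemma core_no (T : finType) (s : nat) (Ws Es : {set {set T}}) W0 :
  2 < s -> W0 \in Ws ->
  (forall W, W \in Ws -> #|W| = s.+1) ->
  (forall W1 W2, W1 \in Ws -> W2 \in Ws -> W1 :&: W2 != set0) ->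
  (forall v, exists2 W, W \in Ws & v \notin W) ->
  (forall e, e \in Es -> #|e| = 2 /\ forall W, W \in Ws -> e :&: W != set0) ->
  #|Es| = s * s.+1 + 1 ->
  (forall W1 W2, W1 \in Ws -> W2 \in Ws -> #|W1 :&: W2| != 1) -> False.
Proof.
move=> s2 W0in HW HI Hv HE cE Hno.
have Hs : forall W1 W2, W1 \in Ws -> W2 \in Ws -> W1 != W2 -> #|W1 :&: W2| = s.
  move=> W1 W2 W1in W2in W12.
  have i1 : 0 < #|W1 :&: W2| by rewrite card_gt0 HI.
  have i2 := Hno _ _ W1in W2in.
  have i3 : #|W1 :&: W2| <= s.
    have : #|W1 :&: W2| <= #|W1| by apply/subset_leq_card/subsetIl.
    rewrite (HW _ W1in) leq_eqVlt ltnS => /orP[/eqP h|//].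
    exfalso; move/negP: W12; apply.
    have E : W1 :&: W2 = W1 by apply/eqP; rewrite eqEcard subsetIl h (HW _ W1in) /=.
    move/setIidPl: E => sub.
    by rewrite eqEcard sub (HW _ W1in) (HW _ W2in) leqnn.
  have hb := pair_bound HW Hv HE W1in W2in.
  rewrite cE in hb.
  exact: no_case_arith.
have [v vW0] : exists v, v \in W0 by apply/set0Pn; rewrite -card_gt0 (HW _ W0in).
have [W2 W2in vW2] := Hv v.
have W02 : W0 != W2 by apply: contraNneq vW2 => <-.
set U := W0 :|: W2.
have cU : #|U| = s.+2.
  by rewrite /U cardsU (HW _ W0in) (HW _ W2in) (Hs _ _ W0in W2in W02); lia.
have sub : Es \subset [set e : {set T} | e \subset U & #|e| == 2].
  apply/subsetP => e eE; have [ce cW] := HE e eE; rewrite inE ce eqxx andbT.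
  apply/subsetP => y ye; apply/negPn/negP => yU.
  have [yW0 yW2] : y \notin W0 /\ y \notin W2 by move: yU; rewrite inE negb_or => /andP.
  have /set0Pn[x1] := cW W0 W0in; rewrite inE => /andP[x1e x1W].
  have /set0Pn[x2] := cW W2 W2in; rewrite inE => /andP[x2e x2W].
  have yx1 : y != x1 by apply: contraNneq yW0 => ->.
  have yx2 : y != x2 by apply: contraNneq yW2 => ->.
  have E1 := card2_eq ce ye x1e yx1.
  have x21 : x2 = x1.
    by move: x2e; rewrite E1 !inE eq_sym (negbTE yx2) /= => /eqP.
  subst x2.
  have [W3 W3in xW3] := Hv x1.
  have yW3 : y \in W3.
    have /set0Pn[z] := cW W3 W3in; rewrite inE => /andP[ze zW3].
    move: ze; rewrite E1 !inE => /orP[/eqP zy|/eqP zx]; first by rewrite -zy.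
    by rewrite -zx zW3 in xW3.
  have step : forall W, W \in Ws -> x1 \in W -> W :\ x1 \subset W3.
    move=> W Win xW.
    have W3W : W3 != W by apply: contraNneq xW3 => ->.
    have c3 := Hs _ _ W3in Win W3W.
    have s1 : W3 :&: W \subset W :\ x1.
      apply/subsetP => z; rewrite !inE => /andP[zW3 ->]; rewrite andbT.
      by apply: contraNneq xW3 => <-.
    have cD : #|W :\ x1| = s by have := cardsD1 x1 W; rewrite xW (HW _ Win) add1n => -[->].
    have E : W3 :&: W = W :\ x1 by apply/eqP; rewrite eqEcard s1 cD c3 /=.
    by rewrite -E subsetIl.
  have sub3 : y |: (U :\ x1) \subset W3.
    rewrite subUset sub1set yW3 /= /U setDUl subUset.
    by rewrite (step _ W0in x1W) (step _ W2in x2W).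
  have := subset_leq_card sub3.
  rewrite cardsU1 (HW _ W3in).
  have -> : y \notin U :\ x1 by rewrite inE negb_and yU orbT.
  have x1U : x1 \in U by rewrite /U inE x1W.
  have cUx : #|U :\ x1| = s.+1 by have := cardsD1 x1 U; rewrite x1U cU add1n => -[<-].
  by rewrite cUx add1n ltnn.
have := subset_leq_card sub; rewrite cards_draws cU cE.
have := bin2_lt (ltnW s2); lia.
Qed.

Lemma yes_arith s a b y : s * s.+1 + 1 <= a + b -> b <= y -> y <= s * s -> a <= s.+1 ->
  y <= b /\ s.+1 <= a.
Proof. move=> h1 h2 h3 h4; nia. Qed.

Lemma core (T : finType) (s : nat) (Ws Es : {set {set T}}) W0 :
  2 < s -> W0 \in Ws ->
  (forall W, W \in Ws -> #|W| = s.+1) ->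
  (forall W1 W2, W1 \in Ws -> W2 \in Ws -> W1 :&: W2 != set0) ->
  (forall v, exists2 W, W \in Ws & v \notin W) ->
  (forall e, e \in Es -> #|e| = 2 /\ forall W, W \in Ws -> e :&: W != set0) ->
  #|Es| = s * s.+1 + 1 ->
  exists (a : T) (B C : {set T}) (u : T), [/\ #|B| = s, #|C| = s, a \notin B, a \notin C & [disjoint B & C]] /\
     [/\ u \in C, a |: B \in Ws, a |: C \in Ws, u |: B \in Ws &
        forall W, W \in Ws -> [\/ W = a |: B, W = a |: C | W = u |: B]].
Proof.
move=> s2 W0in HW HI Hv HE cE.
case: (boolP [exists W1 in Ws, exists W2 in Ws, #|W1 :&: W2| == 1]); last first.
  move=> Hno; exfalso; apply: (core_no s2 W0in HW HI Hv HE cE) => W1 W2 W1in W2in.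
  apply: contraNneq Hno => h; apply/existsP; exists W1; rewrite W1in /=.
  by apply/existsP; exists W2; rewrite W2in h.
case/existsP => W1 /andP[W1in /existsP[W2 /andP[W2in /cards1P[a Ea]]]].
have aW12 : a \in W1 :&: W2 by rewrite Ea inE.
have aW1 : a \in W1 by move: aW12; rewrite inE => /andP[].
have aW2 : a \in W2 by move: aW12; rewrite inE => /andP[].
set B := W1 :\ a; set C := W2 :\ a.
have cB : #|B| = s by have := cardsD1 a W1; rewrite aW1 (HW _ W1in) add1n => -[->].
have cC : #|C| = s by have := cardsD1 a W2; rewrite aW2 (HW _ W2in) add1n => -[->].
have aB : a \notin B by rewrite !inE eqxx.
have aC : a \notin C by rewrite !inE eqxx.
have dBC : [disjoint B & C].
  rewrite -setI_eq0; apply/eqP/setP => x; rewrite !inE.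
  apply/negP => /andP[/andP[xa xW1] /andP[_ xW2]].
  have : x \in W1 :&: W2 by rewrite inE xW1 xW2.
  by rewrite Ea inE (negbTE xa).
have eW1 : W1 = a |: B by rewrite setD1K.
have eW2 : W2 = a |: C by rewrite setD1K.
have [W3 W3in aW3] := Hv a.
set Ea' := [set e in Es | a \in e].
set Y := [set [set p.1; p.2] | p in setX B C].
have sub : Es \subset Ea' :|: (Es :&: Y).
  apply/subsetP => e eE; have [ce cW] := HE e eE.
  rewrite !inE eE /=; case: (boolP (a \in e)) => //= ae.
  have /set0Pn[b] := cW W1 W1in; rewrite inE => /andP[be bW1].
  have /set0Pn[c] := cW W2 W2in; rewrite inE => /andP[ce' cW2].
  have ba : b != a by apply: contraNneq ae => <-.
  have ca : c != a by apply: contraNneq ae => <-.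
  have bB : b \in B by rewrite /B !inE ba bW1.
  have cC' : c \in C by rewrite /C !inE ca cW2.
  have bc : b != c by apply: contraTneq cC' => <-; rewrite (disjointFr dBC bB).
  rewrite (card2_eq ce be ce' bc); apply/imsetP; exists (b, c) => //.
  by rewrite inE bB cC'.
have cEa : #|Ea'| <= s.+1.
  apply: (deg_bound (W:=W3)) => //; last exact: HW.
  by move=> e eE; have [c h] := HE e eE; split => //; apply: h.
have cY : #|Y| <= s * s by apply: leq_trans (leq_imset_card _ _) _; rewrite cardsX cB cC.
have hsum : #|Es| <= #|Ea'| + #|Es :&: Y|.
  exact: leq_trans (subset_leq_card sub) (leq_card_setU _ _).
have cEY : #|Es :&: Y| <= #|Y| by apply/subset_leq_card/subsetIr.
have YE : Y \subset Es.
  have hY : #|Y| <= #|Es :&: Y|.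
    by rewrite cE in hsum; have [] := yes_arith hsum cEY cY cEa.
  have : Es :&: Y == Y by rewrite eqEcard subsetIr hY.
  by move/eqP/setIidPr.
have cEa2 : s.+1 <= #|Ea'|.
  by rewrite cE in hsum; have [] := yes_arith hsum cEY cY cEa.
have HY : forall b c, b \in B -> c \in C -> [set b; c] \in Es.
  move=> b c bB cC'; apply: (subsetP YE); apply/imsetP; exists (b, c) => //.
  by rewrite inE bB cC'.
have Cov : forall W, W \in Ws -> B \subset W \/ C \subset W.
  move=> W Win; case: (boolP (B \subset W)) => [h|/subsetPn[b bB bW]]; [by left|right].
  apply/subsetP => c cC'; have := (HE _ (HY b c bB cC')).2 W Win.
  case/set0Pn => z; rewrite !inE => /andP[/orP[/eqP zb|/eqP zc] zW].
    by rewrite -zb zW in bW.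
  by rewrite -zc.
have Uniq : forall W W', W \in Ws -> W' \in Ws -> a \notin W -> a \notin W' -> W = W'.
  move=> W W' Win W'in aW aW'.
  have subE : Ea' \subset [set [set a; y] | y in W :&: W'].
    apply/subsetP => e; rewrite inE => /andP[eE ae].
    have [ce cW] := HE e eE.
    have [y yW ey] := edge_form ce ae aW (cW W Win).
    have [y' yW' ey'] := edge_form ce ae aW' (cW W' W'in).
    have yy : y = y'.
      have : y \in e by rewrite ey !inE eqxx orbT.
      rewrite ey' !inE => /orP[/eqP ya|/eqP //].
      by move: aW; rewrite -ya yW.
    by rewrite ey; apply: imset_f; rewrite inE yW yy yW'.
  have c1 : s.+1 <= #|W :&: W'|.
    exact: leq_trans cEa2 (leq_trans (subset_leq_card subE) (leq_imset_card _ _)).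
  have EW : W :&: W' = W.
    apply/eqP; rewrite eqEcard subsetIl (HW _ Win) c1 //.
  move/setIidPl: EW => sWW'.
  by apply/eqP; rewrite eqEcard sWW' (HW _ Win) (HW _ W'in) leqnn.
have fin : forall (B' C' : {set T}) (u : T), #|B'| = s -> #|C'| = s -> a \notin B' -> a \notin C' ->
    [disjoint B' & C'] -> a |: B' \in Ws -> a |: C' \in Ws ->
    (forall W, W \in Ws -> B' \subset W \/ C' \subset W) ->
    u \in C' -> u |: B' \in Ws ->
    exists (a : T) (B C : {set T}) (u : T), [/\ #|B| = s, #|C| = s, a \notin B, a \notin C & [disjoint B & C]] /\
     [/\ u \in C, a |: B \in Ws, a |: C \in Ws, u |: B \in Ws &
        forall W, W \in Ws -> [\/ W = a |: B, W = a |: C | W = u |: B]].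
  move=> B' C' u cB' cC' aB' aC' dBC' W1' W2' Cov' uC' W3'.
  exists a, B', C', u; split; first by [].
  split=> // W Win.
  have au : a != u by apply: contraNneq aC' => ->.
  case: (boolP (a \in W)) => aW.
    case: (Cov' W Win) => h.
      apply: Or31; apply/eqP; rewrite eq_sym eqEcard subUset sub1set aW h /=.
      by rewrite (HW _ Win) cardsU1 aB' cB'.
    apply: Or32; apply/eqP; rewrite eq_sym eqEcard subUset sub1set aW h /=.
    by rewrite (HW _ Win) cardsU1 aC' cC'.
  apply: Or33; apply: Uniq => //.
  by rewrite !inE negb_or au.
have W1in' : a |: B \in Ws by rewrite -eW1.
have W2in' : a |: C \in Ws by rewrite -eW2.
have cW3 := HW _ W3in.
case: (Cov W3 W3in) => h.
  have [u uB eW3] := add_one h (etrans cW3 (congr1 S (esym cB))).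
  have uC : u \in C.
    have /set0Pn[z] := HI _ _ W3in W2in'; rewrite inE => /andP[zW3 zW2].
    have za : z != a by apply: contraNneq aW3 => <-.
    have zC : z \in C by move: zW2; rewrite !inE (negbTE za).
    move: zW3; rewrite eW3 in_setU1 => /orP[/eqP <- //|zB].
    by rewrite (disjointFr dBC zB) in zC.
  by apply: (fin B C u) => //; rewrite -eW3.
have [u uC eW3] := add_one h (etrans cW3 (congr1 S (esym cC))).
have uB : u \in B.
  have /set0Pn[z] := HI _ _ W3in W1in'; rewrite inE => /andP[zW3 zW1].
  have za : z != a by apply: contraNneq aW3 => <-.
  have zB : z \in B by move: zW1; rewrite !inE (negbTE za).
  move: zW3; rewrite eW3 in_setU1 => /orP[/eqP <- //|zC].
  by rewrite (disjointFr dBC zB) in zC.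
apply: (fin C B u) => //; first by rewrite disjoint_sym.
  by move=> W Win; case: (Cov W Win); [right|left].
by rewrite -eW3.
Qed.

Lemma max_mem n k t (F : {set {set 'I_n}}) : t <= k -> maximal_tint k t F ->
  forall G : {set 'I_n}, #|G| = k -> (forall F', F' \in F -> t <= #|G :&: F'|) -> G \in F.
Proof.
move=> tk [Hu Hi Hm] G cG HG.
have E : G |: F = F.
  apply: Hm; last exact: subsetUr.
  - move=> A; rewrite in_setU1 => /orP[/eqP->//|AF]; exact: Hu.
  - move=> A B; rewrite !in_setU1 => /orP[/eqP->|AF] /orP[/eqP->|BF].
    + by rewrite setIid cG.
    + exact: HG.
    + by rewrite setIC; exact: HG.
    + exact: Hi.
by rewrite -E in_setU1 eqxx.
Qed.

Lemma card_split n (A T0 : {set 'I_n}) : #|A| = #|A :&: T0| + #|A :\: T0|.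
Proof. by rewrite cardsID. Qed.

Lemma inter_split n (X F' T0 : {set 'I_n}) : T0 \subset X ->
  #|X :&: F'| = #|T0 :&: F'| + #|(X :\: T0) :&: F'|.
Proof.
move=> sT; rewrite (card_split (X :&: F') T0).
have -> : X :&: F' :&: T0 = T0 :&: F'.
  apply/setP => x; rewrite !inE; case xT: (x \in T0); rewrite ?andbT ?andbF //=.
  by rewrite (subsetP sT x xT).
have -> : X :&: F' :\: T0 = (X :\: T0) :&: F'.
  by apply/setP => x; rewrite !inE; case: (x \in T0); rewrite /= ?andbF.
by [].
Qed.

Lemma setUDsub (T : finType) (A B : {set T}) : B \subset A -> B :|: (A :\: B) = A.
Proof.
move=> h; apply/setP => x; rewrite !inE; case xB: (x \in B) => /=; last by [].
by rewrite (subsetP h x xB).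
Qed.

Lemma arith1 n k t : 2 * k < n -> t + 3 <= k -> [/\ 2 < k - t, t <= k, t + 2 <= n & t <= n].
Proof. move=> h1 h2; split; lia. Qed.

Lemma arith2 t x y : x < t -> x != t.-1 -> t <= x + y -> y <= 2 -> [/\ y = 2, x = t - 2 & 2 <= t].
Proof. move=> *; split; lia. Qed.

Lemma arith3 k t x w : 0 < t -> t <= k -> k = x + w -> x = t.-1 -> w = (k - t).+1.
Proof. move=> *; lia. Qed.

Lemma arith4 k t x w : 2 <= t -> t <= k -> k = x + w -> x = t - 2 -> w = (k - t).+2.
Proof. move=> *; lia. Qed.

Lemma setA_part n k t (F : {set {set 'I_n}}) :
  2 * k < n -> t + 3 <= k ->
  maximal_tint k t F ->
  tau t F = t + 2 ->
  tau t (Tcov t F) = t ->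
  #|Tcov t F| = (k - t) * (k - t + 1) + 1 ->
  exists (T0 : {set 'I_n}), 
   [/\ #|T0| = t, 0 < t,
       forall F', F' \in F -> ~~ (T0 \subset F') -> #|F' :&: T0| = t.-1 &
       exists (a : 'I_n) (B C : {set 'I_n}) (u : 'I_n),
       [/\ #|B| = k - t, #|C| = k - t, a \notin B, a \notin C & [disjoint B & C]] /\
       [/\ u \in C, [disjoint T0 & a |: (B :|: C)], 
           exists2 F1, F1 \in F & ~~ (T0 \subset F1) /\ F1 :\: T0 = a |: B,
           exists2 F2, F2 \in F & ~~ (T0 \subset F2) /\ F2 :\: T0 = a |: C &
           exists2 F3, F3 \in F & ~~ (T0 \subset F3) /\ F3 :\: T0 = u |: B] /\
       forall F', F' \in F -> ~~ (T0 \subset F') ->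
         [\/ F' :\: T0 = a |: B, F' :\: T0 = a |: C | F' :\: T0 = u |: B]].
Proof.
move=> hn hk Hmax htau htauT hcard.
have [s3 tk t2n tn] := arith1 hn hk.
set s := k - t.
set TC := Tcov t F.
have [T0 [covT0 cT0]] : exists T0, tcover t TC T0 /\ #|T0| = tau t TC.
  by apply: tau_attained; rewrite htauT.
rewrite htauT in cT0.
have XTC : forall X, X \in TC -> [/\ tcover t F X, #|X| = t + 2 & T0 \subset X].
  move=> X XT; have := XT; rewrite /TC /Tcov inE => /andP[cov /eqP cX].
  split => //; first by rewrite cX htau.
  have h : t <= #|T0 :&: X| by move/tcoverP: covT0; apply.
  have E : T0 :&: X = T0 by apply/eqP; rewrite eqEcard subsetIl cT0 h.
  by apply/setIidPl.
have [X0 X0T] : exists X0, X0 \in TC.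
  by apply/set0Pn; rewrite -card_gt0 hcard addn1.
have cXD : forall X, X \in TC -> #|X :\: T0| = 2.
  move=> X XT; have [_ cX sT] := XTC X XT.
  by rewrite cardsD (setIidPr sT) cX cT0; lia.
have [F0 F0F nF0] : exists2 F0, F0 \in F & ~~ (T0 \subset F0).
  case: (boolP [exists x in F, ~~ (T0 \subset x)]) => [/exists_inP //|/exists_inPn H].
  exfalso.
  have : tcover t F T0.
    apply/tcoverP => A AF; have := H A AF; rewrite negbK => sA.
    by rewrite (setIidPl sA) cT0.
  by move/tau_le; rewrite htau cT0; lia.
have ltT : forall F' : {set 'I_n}, ~~ (T0 \subset F') -> #|T0 :&: F'| < t.
  move=> F' nF; have hle : #|T0 :&: F'| <= t by rewrite -cT0; apply/subset_leq_card/subsetIl.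
  rewrite ltn_neqAle hle andbT; apply: contraNneq nF => h.
  have E : T0 :&: F' = T0 by apply/eqP; rewrite eqEcard subsetIl cT0 h leqnn.
  by apply/setIidPl.
have t0 : 0 < t by have := ltT _ nF0; lia.
set Es := [set X :\: T0 | X in TC].
have cEs : #|Es| = #|TC|.
  apply: card_in_imset => X Y XT YT E.
  have [_ _ sX] := XTC X XT; have [_ _ sY] := XTC Y YT.
  by rewrite -(setUDsub sX) -(setUDsub sY) E.
have Hu : kuniform k F by case: Hmax.
have Hi : t_intersecting t F by case: Hmax.
have c1 : forall F', F' \in F -> ~~ (T0 \subset F') -> #|F' :&: T0| = t.-1.
  move=> F' F'F nF.
  have lt := ltT _ nF.
  have yb : forall X, X \in TC -> t <= #|T0 :&: F'| + #|(X :\: T0) :&: F'| /\ #|(X :\: T0) :&: F'| <= 2.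
    move=> X XT; have [cov _ sT] := XTC X XT; split.
      by rewrite -(inter_split F' sT); move/tcoverP: cov; apply.
    by rewrite -(cXD X XT); apply/subset_leq_card/subsetIl.
  rewrite setIC; case: (eqVneq #|T0 :&: F'| t.-1) => // hne; exfalso.
  have [y02 x2 t2] := let: conj a b := yb X0 X0T in arith2 lt hne a b.
  have sub : Es \subset [set e : {set 'I_n} | e \subset F' :\: T0 & #|e| == 2].
    apply/subsetP => e /imsetP[X XT ->]; rewrite inE cXD // eqxx andbT.
    have [h1 h2] := yb X XT.
    have [y2 _ _] := arith2 lt hne h1 h2.
    have E : (X :\: T0) :&: F' = X :\: T0 by apply/eqP; rewrite eqEcard subsetIl y2 cXD.
    apply/subsetP => z zX; move: (zX); rewrite -E !inE => /andP[/andP[zT _] zF].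
    by rewrite zT zF.
  have := subset_leq_card sub; rewrite cards_draws.
  have cW : #|F' :\: T0| = s.+2.
    have hk' := card_split F' T0; rewrite (Hu F' F'F) setIC in hk'.
    exact: (arith4 t2 tk hk' x2).
  rewrite cW cEs hcard; have := bin2_lt (ltnW s3).
  by rewrite /s; clear; lia.
set NS := [set F' in F | ~~ (T0 \subset F')].
set Ws := [set F' :\: T0 | F' in NS].
have F0NS : F0 \in NS by rewrite inE F0F nF0.
have WsE : forall W, W \in Ws -> exists F', [/\ F' \in F, ~~ (T0 \subset F') & W = F' :\: T0].
  by move=> W /imsetP[F' ]; rewrite inE => /andP[F'F nF] ->; exists F'.
have HW : forall W, W \in Ws -> #|W| = s.+1.
  move=> W /WsE[F' [F'F nF ->]].
  have hk' := card_split F' T0; rewrite (Hu F' F'F) in hk'.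
  exact: (arith3 t0 tk hk' (c1 F' F'F nF)).
have HI : forall W1 W2, W1 \in Ws -> W2 \in Ws -> W1 :&: W2 != set0.
  move=> W1 W2 /WsE[F1 [F1F nF1 ->]] /WsE[F2 [F2F nF2 ->]].
  rewrite -card_gt0.
  have h := Hi F1 F2 F1F F2F.
  rewrite (card_split (F1 :&: F2) T0) in h.
  have h1 : #|F1 :&: F2 :&: T0| <= t.-1.
    rewrite -(c1 F1 F1F nF1); apply: subset_leq_card.
    by apply/subsetP => x; rewrite !inE => /andP[/andP[-> _] ->].
  have -> : (F1 :\: T0) :&: (F2 :\: T0) = F1 :&: F2 :\: T0.
    by apply/setP => x; rewrite !inE; case: (x \in T0).
  move: h h1 t0; clear; lia.
have Hv : forall v, exists2 W, W \in Ws & v \notin W.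
  move=> v; case: (boolP (v \in T0)) => vT.
    by exists (F0 :\: T0); [apply: imset_f | rewrite inE vT].
  case: (boolP [forall W in Ws, v \in W]) => [/forall_inP H|/forall_inPn[W Win vW]]; last by exists W.
  exfalso.
  have : tcover t F (v |: T0).
    apply/tcoverP => A AF.
    case: (boolP (T0 \subset A)) => sA.
      rewrite -cT0; apply: subset_leq_card; apply/subsetP => x xT.
      by rewrite !inE xT (subsetP sA x xT) orbT.
    have vA : v \in A :\: T0 by apply: H; apply: imset_f; rewrite inE AF sA.
    have : v |: (A :&: T0) \subset (v |: T0) :&: A.
      apply/subsetP => x; rewrite !inE => /orP[/eqP->|/andP[xA xT]].
        by move: vA; rewrite !inE => /andP[_ ->]; rewrite eqxx.
      by rewrite xT xA orbT.
    move/subset_leq_card; rewrite cardsU1 (c1 A AF sA).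
    have -> : v \notin A :&: T0 by rewrite inE negb_and vT orbT.
    by move: t0; clear; move=> t0 h; apply: leq_trans h; rewrite add1n prednK.
  move/tau_le; rewrite htau cardsU1 vT cT0 add1n addn2 ltnn //.
have HE : forall e, e \in Es -> #|e| = 2 /\ forall W, W \in Ws -> e :&: W != set0.
  move=> e /imsetP[X XT ->]; split; first exact: cXD.
  move=> W /WsE[F' [F'F nF ->]].
  have [cov _ sT] := XTC X XT.
  have h : t <= #|X :&: F'| by move/tcoverP: cov; apply.
  rewrite (inter_split F' sT) setIC (c1 F' F'F nF) in h.
  have -> : (X :\: T0) :&: (F' :\: T0) = (X :\: T0) :&: F'.
    by apply/setP => x; rewrite !inE; case: (x \in T0); rewrite ?andbF.
  rewrite -card_gt0; move: h t0; clear; lia.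
have cE : #|Es| = s * s.+1 + 1 by rewrite cEs hcard /s; clear; nia.
have W0in : F0 :\: T0 \in Ws by apply: imset_f.
have [a [B [C [u [[cB cC aB aC dBC] [uC W1in W2in W3in Wall]]]]]] :=
  core s3 W0in HW HI Hv HE cE.
have WT : forall W x, W \in Ws -> x \in W -> x \notin T0.
  by move=> W x /WsE[F' [_ _ ->]]; rewrite inE => /andP[].
exists T0; split => //.
exists a, B, C, u; split; first by split.
split.
  split => //.
  - rewrite -setI_eq0; apply/eqP/setP => x; rewrite !inE.
    apply/negP => /andP[xT /orP[/eqP xa|/orP[xB|xC]]].
    + by have := WT _ a W1in (setU11 _ _); rewrite -xa xT.
    + by have := WT _ x W1in (setU1r _ xB); rewrite xT.
    + by have := WT _ x W2in (setU1r _ xC); rewrite xT.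
  - by have [F1 [F1F nF1 E]] := WsE _ W1in; exists F1.
  - by have [F1 [F1F nF1 E]] := WsE _ W2in; exists F1.
  - by have [F1 [F1F nF1 E]] := WsE _ W3in; exists F1.
move=> F' F'F nF; apply: Wall; apply: imset_f; by rewrite inE F'F nF.
Qed.

Lemma setDIC n (X F' T0 : {set 'I_n}) : (X :\: T0) :&: F' = X :&: (F' :\: T0).
Proof. by apply/setP => x; rewrite !inE; case: (x \in T0); rewrite /= ?andbF. Qed.

Lemma typeI_part n k t (F : {set {set 'I_n}}) :
  2 * k < n -> t + 3 <= k ->
  maximal_tint k t F ->
  tau t F = t + 2 ->
  tau t (Tcov t F) = t ->
  #|Tcov t F| = (k - t) * (k - t + 1) + 1 ->
  exists (T0 : {set 'I_n}) (a : 'I_n) (B C : {set 'I_n}) (u : 'I_n) (R : {set 'I_n}),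
    [/\ #|T0| = t, #|R| = t.-1, 0 < t, R \subset T0 & #|B| = k - t] /\
    [/\ #|C| = k - t, a \notin B, a \notin C, [disjoint B & C] & u \in C] /\
    [/\ [disjoint T0 & a |: (B :|: C)], R :|: (a |: B) \in F, R :|: (a |: C) \in F,
        R :|: (u |: B) \in F & ~~ (T0 \subset R :|: (a |: B))] /\
    [/\ ~~ (T0 \subset R :|: (a |: C)), ~~ (T0 \subset R :|: (u |: B)),
     (forall X : {set 'I_n}, #|X| = k -> T0 \subset X -> X :&: (a |: B) != set0 ->
        X :&: (a |: C) != set0 -> X :&: (u |: B) != set0 -> X \in F) &
     F = typeI_family k T0 (a |: R) B C u].
Proof.
move=> hn hk Hmax htau htauT hcard.
have [s3 tk t2n tn] := arith1 hn hk.
have [Hu Hi _] := Hmax.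
have [T0 [cT0 t0 c1 [a [B [C [u [[cB cC aB aC dBC]
   [[uC dT [F1 F1F [nF1 E1]] [F2 F2F [nF2 E2]] [F3 F3F [nF3 E3]]] Wall]]]]]]]] :=
  setA_part hn hk Hmax htau htauT hcard.
have same_x : forall G G' : {set 'I_n}, G \in F -> ~~ (T0 \subset G) -> G' \in F -> ~~ (T0 \subset G') ->
   #|(G :\: T0) :&: (G' :\: T0)| = 1 -> G :&: T0 = G' :&: T0.
  move=> G G' GF nG G'F nG' h1.
  have h := Hi G G' GF G'F.
  rewrite (card_split (G :&: G') T0) in h.
  have E : G :&: G' :\: T0 = (G :\: T0) :&: (G' :\: T0).
    by apply/setP => x; rewrite !inE; case: (x \in T0); rewrite /= ?andbF.
  rewrite E h1 in h.
  have h2 : #|G :&: T0| <= #|G :&: G' :&: T0| by rewrite (c1 G GF nG); move: h t0; clear; lia.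
  have h3 : #|G' :&: T0| <= #|G :&: G' :&: T0| by rewrite (c1 G' G'F nG'); move: h t0; clear; lia.
  have e1 : G :&: G' :&: T0 = G :&: T0.
    apply/eqP; rewrite eqEcard h2 andbT; apply/subsetP => x; rewrite !inE.
    by case/andP => /andP[-> _] ->.
  have e2 : G :&: G' :&: T0 = G' :&: T0.
    apply/eqP; rewrite eqEcard h3 andbT; apply/subsetP => x; rewrite !inE.
    by case/andP => /andP[_ ->] ->.
  by rewrite -e1 e2.
have nT : forall x, x \in a |: (B :|: C) -> x \notin T0.
  by move=> x xA; apply/negP => xT; rewrite (disjointFr dT xT) in xA.
have i12 : #|(a |: B) :&: (a |: C)| = 1.
  have -> : (a |: B) :&: (a |: C) = [set a].
    apply/setP => x; rewrite !inE; case: (eqVneq x a) => //= xa.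
    by apply/negP => /andP[xB xC]; rewrite (disjointFr dBC xB) in xC.
  by rewrite cards1.
have i23 : #|(a |: C) :&: (u |: B)| = 1.
  have -> : (a |: C) :&: (u |: B) = [set u].
    apply/setP => x; rewrite !inE; case: (eqVneq x u) => [->|xu] /=.
      by rewrite uC orbT.
    apply/negP => /andP[/orP[/eqP xa|xC] xB].
      by move: xB; rewrite xa (negbTE aB).
    by rewrite (disjointFr dBC xB) in xC.
  by rewrite cards1.
have [R RF2] : exists R, F2 :&: T0 = R by exists (F2 :&: T0).
have RF1 : F1 :&: T0 = R by rewrite -RF2; apply: same_x => //; rewrite E1 E2 i12.
have RF3 : F3 :&: T0 = R by rewrite -RF2; apply: same_x => //; rewrite E3 E2 setIC i23.
have allR : forall G, G \in F -> ~~ (T0 \subset G) -> G :&: T0 = R.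
  move=> G GF nG; case: (Wall G GF nG) => EG.
  - by rewrite -RF2; apply: same_x => //; rewrite EG E2 i12.
  - by rewrite -RF1; apply: same_x => //; rewrite EG E1 setIC i12.
  - by rewrite -RF2; apply: same_x => //; rewrite EG E2 setIC i23.
have eF1 : F1 = R :|: (a |: B) by rewrite -{1}(setID F1 T0) RF1 E1.
have eF2 : F2 = R :|: (a |: C) by rewrite -{1}(setID F2 T0) RF2 E2.
have eF3 : F3 = R :|: (u |: B) by rewrite -{1}(setID F3 T0) RF3 E3.
have cR : #|R| = t.-1 by rewrite -RF2; exact: c1 F2 F2F nF2.
have RT : R \subset T0 by rewrite -RF2; apply: subsetIr.
have F0mem : forall X : {set 'I_n}, #|X| = k -> T0 \subset X -> X :&: (a |: B) != set0 ->
        X :&: (a |: C) != set0 -> X :&: (u |: B) != set0 -> X \in F.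
  move=> X cX sX n1 n2 n3; apply: (max_mem tk Hmax cX) => G GF.
  case: (boolP (T0 \subset G)) => sG.
    rewrite -cT0; apply: subset_leq_card; apply/subsetP => x xT.
    by rewrite inE (subsetP sX x xT) (subsetP sG x xT).
  rewrite (inter_split G sX) setIC (c1 G GF sG) setDIC.
  have : X :&: (G :\: T0) != set0 by case: (Wall G GF sG) => ->.
  rewrite -card_gt0; move: t0; clear; lia.
have F0conv : forall X, X \in F -> T0 \subset X -> forall G, G \in F -> ~~ (T0 \subset G) ->
     X :&: (G :\: T0) != set0.
  move=> X XF sX G GF nG; have h := Hi X G XF GF.
  rewrite (inter_split G sX) setIC (c1 G GF nG) setDIC in h.
  by rewrite -card_gt0; move: h t0; clear; lia.
have aT : a \notin T0 by apply: nT; rewrite setU11.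
have TA : T0 :&: (a |: R) = R.
  apply/setP => x; rewrite !inE; case: (eqVneq x a) => [->|_] /=.
    rewrite (negbTE aT); apply/esym/negbTE; apply: contra aT => aR.
    exact: (subsetP RT a aR).
  case xR: (x \in R); rewrite ?andbF ?andbT //; exact: (subsetP RT x xR).
have ATe : (a |: R) :|: T0 = a |: T0.
  apply/setP => x; rewrite !inE; case xR: (x \in R); rewrite ?orbT ?orbF //=.
  by rewrite (subsetP RT x xR) orbT.
have ext : forall X Y Z : {set 'I_n}, Y \subset Z -> X :&: Y != set0 -> X :&: Z != set0.
  move=> X Y Z sYZ /set0Pn[z]; rewrite inE => /andP[zX zY]; apply/set0Pn; exists z.
  by rewrite inE zX (subsetP sYZ z zY).
exists T0, a, B, C, u, R.
split; first by split.
split; first by split.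
split; first by split => //; rewrite -?eF1 -?eF2 -?eF3.
split; first by rewrite -eF2.
  by rewrite -eF3.
  exact: F0mem.
apply/setP => X; rewrite /typeI_family inE TA ATe.
apply/idP/idP.
- move=> XF; rewrite (Hu X XF) eqxx /=.
  case: (boolP (T0 \subset X)) => sX.
    have n1 := F0conv X XF sX F1 F1F nF1; rewrite E1 in n1.
    have n2 := F0conv X XF sX F2 F2F nF2; rewrite E2 in n2.
    have n3 := F0conv X XF sX F3 F3F nF3; rewrite E3 in n3.
    case: (boolP (a \in X)) => aX.
      apply/orP; right; apply/orP; left.
      by rewrite n3 andbT subUset sub1set aX sX.
    apply/orP; left; apply/and3P; split.
    + apply/eqP/setP => x; rewrite !inE; case: (eqVneq x a) => [->|_] /=.
        by rewrite (negbTE aX) (negbTE aT).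
      case xT: (x \in T0); rewrite ?andbT ?andbF //; exact: (subsetP sX x xT).
    + case/set0Pn: n1 => z; rewrite !inE => /andP[zX /orP[/eqP za|zB]].
        by rewrite za (negbTE aX) in zX.
      by apply/set0Pn; exists z; rewrite inE zX zB.
    + case/set0Pn: n2 => z; rewrite !inE => /andP[zX /orP[/eqP za|zC]].
        by rewrite za (negbTE aX) in zX.
      by apply/set0Pn; exists z; rewrite inE zX zC.
  have eX : X = R :|: (X :\: T0) by rewrite -{1}(setID X T0) (allR X XF sX).
  case: (Wall X XF sX) => EW; rewrite eX EW.
  + by apply/orP; right; apply/orP; right; apply/orP; left; rewrite setUCA setUA.
  + by apply/orP; right; apply/orP; right; apply/orP; right; apply/orP; left; rewrite setUCA setUA.
  + by apply/orP; right; apply/orP; right; apply/orP; right; apply/orP; right.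
- case/andP => /eqP cX H.
  case/orP: H => [/and3P[/eqP XA XB XC]|/or4P[/andP[sA XW3]|/eqP->|/eqP->|/eqP->]].
  + have sX : T0 \subset X by rewrite -XA subsetIl.
    apply: F0mem => //.
    * by apply: ext XB; apply: subsetUr.
    * by apply: ext XC; apply: subsetUr.
    * by apply: ext XB; apply: subsetUr.
  + have sX : T0 \subset X by apply: subset_trans sA; apply: subsetUr.
    have aX : a \in X by apply: (subsetP sA); rewrite setU11.
    have na : forall Y : {set 'I_n}, X :&: (a |: Y) != set0.
      by move=> Y; apply/set0Pn; exists a; rewrite !inE aX eqxx.
    by apply: F0mem => //; rewrite na.
  + by rewrite -setUA setUCA -eF1.
  + by rewrite -setUA setUCA -eF2.
  + by rewrite -eF3.
Qed.

Lemma disjP (T : finType) (A B : {set T}) :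
  (forall x, x \in A -> x \in B -> False) -> [disjoint A & B].
Proof.
move=> H; rewrite -setI_eq0; apply/eqP/setP => x; rewrite !inE.
by apply/negP => /andP[h1 h2]; exact: H x h1 h2.
Qed.

Lemma SupP n k (P Z X : {set 'I_n}) :
  X \in Sup k P Z = [&& #|X| == k, P \subset X & [disjoint X & Z]].
Proof. by rewrite inE. Qed.

Lemma sup_bound n k (P Z : {set 'I_n}) p z : [disjoint P & Z] -> #|P| = p -> p <= k ->
  #|Z| <= z -> 'C(n - p - z, k - p) <= #|Sup k P Z|.
Proof.
move=> d cP pk cZ; apply: leq_trans (card_sup d _); last by rewrite cP.
rewrite cP; apply: leq_bin2l; lia.
Qed.

Lemma bound_part n k t (F : {set {set 'I_n}}) (T0 : {set 'I_n}) a (B C : {set 'I_n}) u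
    (R : {set 'I_n}) :
  2 * k < n -> t + 3 <= k -> #|T0| = t ->
  #|B| = k - t -> #|C| = k - t -> a \notin B -> a \notin C -> [disjoint B & C] -> u \in C ->
  [disjoint T0 & a |: (B :|: C)] ->
  R :|: (a |: B) \in F -> R :|: (a |: C) \in F -> R :|: (u |: B) \in F ->
  ~~ (T0 \subset R :|: (a |: B)) -> ~~ (T0 \subset R :|: (a |: C)) -> ~~ (T0 \subset R :|: (u |: B)) ->
  R \subset T0 ->
  (forall X : {set 'I_n}, #|X| = k -> T0 \subset X -> X :&: (a |: B) != set0 ->
        X :&: (a |: C) != set0 -> X :&: (u |: B) != set0 -> X \in F) ->
  (k - t).+1 * 'C(n - (t + 2) - (k - t), k - (t + 2))
    + (k - t) * (k - t) * 'C(n - (t + 2) - (2 * (k - t) - 1), k - (t + 2)) + 3 <= #|F|.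
Proof.
move=> hn hk cT0 cB cC aB aC dBC uC dT G1F G2F G3F nG1 nG2 nG3 RT F0mem.
set s := k - t.
have s3 : 2 < s by rewrite /s; move: hk; clear; lia.
have nT : forall x, x \in a |: (B :|: C) -> x \notin T0.
  by move=> x xA; apply/negP => xT; rewrite (disjointFr dT xT) in xA.
have aT : a \notin T0 by apply: nT; rewrite setU11.
have BT : forall x, x \in B -> x \notin T0.
  by move=> x xB; apply: nT; rewrite !inE xB orbT.
have CT : forall x, x \in C -> x \notin T0.
  by move=> x xC; apply: nT; rewrite !inE xC !orbT.
have au : a != u by apply: contraNneq aC => ->.
set W3 := u |: B.
have aW3 : a \notin W3 by rewrite /W3 !inE negb_or au aB.
have W3T : forall y, y \in W3 -> y \notin T0.
  by move=> y; rewrite /W3 in_setU1 => /orP[/eqP->|/BT //]; apply: CT.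
pose Dy (y : 'I_n) := Sup k (a |: (y |: T0)) [set y' in W3 | (y' < y)%N].
pose Dp (p : 'I_n * 'I_n) := Sup k (p.1 |: (p.2 |: T0))
          (a |: ([set b in B | (b < p.1)%N] :|: [set c in C | (c < p.2)%N])).
set G3 := (R :|: (a |: B)) |: ((R :|: (a |: C)) |: [set R :|: (u |: B)]).
set U1 := \bigcup_(y in W3) Dy y.
set U2 := \bigcup_(p in setX B C) Dp p.
have uB : u \notin B by apply/negP => uB; rewrite (disjointFr dBC uB) in uC.
have cW3 : #|W3| = s.+1 by rewrite /W3 cardsU1 uB cB.
have sT : forall P X : {set 'I_n}, T0 \subset P -> P \subset X -> T0 \subset X.
  by move=> P X h1 h2; apply: subset_trans h2.
have DyF : forall y, y \in W3 -> Dy y \subset F.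
  move=> y yW; apply/subsetP => X; rewrite SupP => /and3P[/eqP cX sP _].
  have aX : a \in X by apply: (subsetP sP); rewrite setU11.
  have yX : y \in X by apply: (subsetP sP); rewrite !inE eqxx orbT.
  have sX : T0 \subset X.
    by apply: subset_trans sP; apply/subsetP => x xT; rewrite !inE xT !orbT.
  apply: F0mem => //; apply/set0Pn.
  - by exists a; rewrite !inE aX eqxx.
  - by exists a; rewrite !inE aX eqxx.
  - by exists y; rewrite inE yX.
have DpF : forall p, p \in setX B C -> Dp p \subset F.
  move=> [b c]; rewrite in_setX /= => /andP[bB cC']; apply/subsetP => X.
  rewrite SupP => /and3P[/eqP cX sP _].
  have bX : b \in X by apply: (subsetP sP); rewrite setU11.
  have cX' : c \in X by apply: (subsetP sP); rewrite !inE eqxx orbT.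
  have sX : T0 \subset X.
    by apply: subset_trans sP; apply/subsetP => x xT; rewrite !inE xT !orbT.
  apply: F0mem => //; apply/set0Pn.
  - by exists b; rewrite !inE bX bB orbT.
  - by exists c; rewrite !inE cX' cC' orbT.
  - by exists b; rewrite !inE bX bB orbT.
have dy : {in W3 &, forall y1 y2, y1 != y2 -> [disjoint Dy y1 & Dy y2]}.
  move=> y1 y2 y1W y2W ne; apply: disjP => X; rewrite !SupP => /and3P[_ s1 d1] /and3P[_ s2 d2].
  have y1X : y1 \in X by apply: (subsetP s1); rewrite !inE eqxx orbT.
  have y2X : y2 \in X by apply: (subsetP s2); rewrite !inE eqxx orbT.
  case: (ltngtP y1 y2) => h.
  - have : y1 \in [set y' in W3 | (y' < y2)%N] by rewrite inE y1W h.
    by rewrite (disjointFr d2 y1X).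
  - have : y2 \in [set y' in W3 | (y' < y1)%N] by rewrite inE y2W h.
    by rewrite (disjointFr d1 y2X).
  - by move/eqP: ne; apply; apply: ord_inj.
have dp : {in setX B C &, forall p1 p2, p1 != p2 -> [disjoint Dp p1 & Dp p2]}.
  move=> [b1 c1] [b2 c2]; rewrite !in_setX /= => /andP[b1B c1C] /andP[b2B c2C] ne.
  apply: disjP => X; rewrite !SupP => /and3P[_ s1 d1] /and3P[_ s2 d2].
  have b1X : b1 \in X by apply: (subsetP s1); rewrite setU11.
  have b2X : b2 \in X by apply: (subsetP s2); rewrite setU11.
  have c1X : c1 \in X by apply: (subsetP s1); rewrite !inE eqxx orbT.
  have c2X : c2 \in X by apply: (subsetP s2); rewrite !inE eqxx orbT.
  case: (ltngtP b1 b2) => hb.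
  - have : b1 \in a |: ([set b in B | (b < b2)%N] :|: [set c in C | (c < c2)%N]).
      by rewrite !inE b1B hb !orbT.
    by rewrite (disjointFr d2 b1X).
  - have : b2 \in a |: ([set b in B | (b < b1)%N] :|: [set c in C | (c < c1)%N]).
      by rewrite !inE b2B hb !orbT.
    by rewrite (disjointFr d1 b2X).
  case: (ltngtP c1 c2) => hc.
  - have : c1 \in a |: ([set b in B | (b < b2)%N] :|: [set c in C | (c < c2)%N]).
      by rewrite !inE c1C hc !orbT.
    by rewrite (disjointFr d2 c1X).
  - have : c2 \in a |: ([set b in B | (b < b1)%N] :|: [set c in C | (c < c1)%N]).
      by rewrite !inE c2C hc !orbT.
    by rewrite (disjointFr d1 c2X).
  by move/eqP: ne; apply; rewrite (ord_inj hb) (ord_inj hc).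
have dU12 : [disjoint U1 & U2].
  apply: disjP => X /bigcupP[y yW]; rewrite SupP => /and3P[_ s1 _].
  move=> /bigcupP[p _]; rewrite SupP => /and3P[_ _ d2].
  have aX : a \in X by apply: (subsetP s1); rewrite setU11.
  have h := disjointFr d2 aX; by rewrite setU11 in h.
have G3nT : forall X, X \in G3 -> ~~ (T0 \subset X).
  by move=> X; rewrite !inE => /orP[/eqP->|/orP[/eqP->|/eqP->]].
have dUG : [disjoint U1 :|: U2 & G3].
  apply: disjP => X XU XG; suff : T0 \subset X by rewrite (negbTE (G3nT X XG)).
  case/setUP: XU => /bigcupP[p _]; rewrite SupP => /and3P[_ sP _];
    apply: subset_trans sP; apply/subsetP => x xT; rewrite !inE xT !orbT //.
have [b0 b0B] : exists b0, b0 \in B by apply/set0Pn; rewrite -card_gt0 cB; move: s3; clear; lia.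
have aR : a \notin R by apply: contra aT; apply: (subsetP RT).
have ne12 : R :|: (a |: B) != R :|: (a |: C).
  apply/negP => /eqP E; have : b0 \in R :|: (a |: C) by rewrite -E !inE b0B !orbT.
  rewrite !inE => /orP[b0R|/orP[/eqP ba|b0C]].
  - by move: (BT b0 b0B); rewrite (subsetP RT b0 b0R).
  - by move: b0B; rewrite ba (negbTE aB).
  - by rewrite (disjointFr dBC b0B) in b0C.
have naG3 : a \notin R :|: (u |: B) by rewrite !inE negb_or aR negb_or au aB.
have ne13 : R :|: (a |: B) != R :|: (u |: B).
  by apply/negP => /eqP E; move: naG3; rewrite -E !inE eqxx orbT.
have ne23 : R :|: (a |: C) != R :|: (u |: B).
  by apply/negP => /eqP E; move: naG3; rewrite -E !inE eqxx orbT.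
have cG3 : #|G3| = 3.
  rewrite /G3 cardsU1 cardsU1 cards1 !inE negb_or ne12 ne13 ne23.
  by [].
have sub : (U1 :|: U2) :|: G3 \subset F.
  apply/subsetP => X; rewrite !in_setU => /orP[/orP[/bigcupP[y yW XD]|/bigcupP[p pB XD]]|XG].
  - exact: (subsetP (DyF y yW)).
  - exact: (subsetP (DpF p pB)).
  - by move: XG; rewrite !inE => /orP[/eqP->|/orP[/eqP->|/eqP->]].
have cUd : forall A B : {set {set 'I_n}}, [disjoint A & B] -> #|A :|: B| = #|A| + #|B|.
  by move=> A1 B1; rewrite -setI_eq0 cardsU => /eqP->; rewrite cards0 subn0.
have cF := subset_leq_card sub.
rewrite (cUd _ _ dUG) (cUd _ _ dU12) cG3 /U1 /U2 -(card_bigcup_disj dy) -(card_bigcup_disj dp) in cF.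
apply: leq_trans cF; rewrite leq_add2r; apply: leq_add.
  rewrite -cW3 -sum_nat_const; apply: leq_sum => y yW.
  apply: sup_bound.
  - apply: disjP => x; rewrite !inE => /orP[/eqP xa|/orP[/eqP xy|xT]] /andP[xW xy'].
    + by move: xW; rewrite xa (negbTE au) (negbTE aB).
    + by rewrite xy ltnn in xy'.
    + have xW' : x \in W3 by rewrite /W3 in_setU1.
      by rewrite (negbTE (W3T x xW')) in xT.
  - rewrite cardsU1 cardsU1 cT0 !inE negb_or (negbTE (W3T y yW)) aT andbT.
    have -> : a != y by apply: contraNneq aW3 => ->.
    by rewrite /=; clear; lia.
  - by move: hk; clear; lia.
  - have : [set y' in W3 | (y' < y)%N] \subset W3 :\ y.
      by apply/subsetP => x; rewrite !inE => /andP[xW h]; rewrite xW andbT; apply: contraTneq h => ->; rewrite ltnn.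
    move/subset_leq_card; have := cardsD1 y W3; rewrite yW cW3 add1n => -[<-] //.
have -> : s * s = #|setX B C| by rewrite cardsX cB cC.
rewrite -sum_nat_const; apply: leq_sum => [[b c]].
rewrite in_setX /= => /andP[bB cC'].
have bc : b != c by apply: contraTneq cC' => <-; rewrite (disjointFr dBC bB).
apply: sup_bound.
- apply: disjP => x; rewrite !inE /= => /orP[/eqP xb|/orP[/eqP xc|xT]] /orP[/eqP xa|/orP[/andP[xB xlt]|/andP[xC xlt]]].
  + by move: bB; rewrite -xb xa (negbTE aB).
  + by rewrite xb ltnn in xlt.
  + by rewrite xb (disjointFr dBC bB) in xC.
  + by move: cC'; rewrite -xc xa (negbTE aC).
  + by rewrite -xc (disjointFr dBC xB) in cC'.
  + by rewrite xc ltnn in xlt.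
  + by rewrite -xa xT in aT.
  + by rewrite (negbTE (BT x xB)) in xT.
  + by rewrite (negbTE (CT x xC)) in xT.
- rewrite cardsU1 cardsU1 cT0 !inE negb_or (negbTE (CT c cC')) (negbTE (BT b bB)) bc.
  by rewrite /=; clear; lia.
- by move: hk; clear; lia.
- apply: leq_trans (_ : 1 + ((s - 1) + (s - 1)) <= _); last by move: s3; clear; lia.
  apply: leq_trans (_ : 1 + #|[set b' in B | (b' < b)%N] :|: [set c' in C | (c' < c)%N]| <= _).
    by rewrite cardsU1; apply: leq_add => //; case: (_ \notin _).
  rewrite leq_add2l; apply: leq_trans (_ : #|[set b' in B | (b' < b)%N]| + #|[set c' in C | (c' < c)%N]| <= _).
    by rewrite cardsU leq_subr.
  have hB : #|B :\ b| = s - 1 by have := cardsD1 b B; rewrite bB cB add1n => E; rewrite /s E subn1.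
  have hC : #|C :\ c| = s - 1 by have := cardsD1 c C; rewrite cC' cC add1n => E; rewrite /s E subn1.
  apply: leq_add.
    rewrite -hB; apply: subset_leq_card; apply/subsetP => x; rewrite !inE => /andP[xB h].
    by rewrite xB andbT; apply: contraTneq h => ->; rewrite ltnn.
  rewrite -hC; apply: subset_leq_card; apply/subsetP => x; rewrite !inE => /andP[xC h].
  by rewrite xC andbT; apply: contraTneq h => ->; rewrite ltnn.
Qed.

Unset Implicit Arguments.
Import GRing.Theory Num.Theory.

Lemma lin_arith s C C1 C2 C' Fs : 2 < s ->
  (s + 1) * C <= (s + 1) * C1 + (s + 1) * (s * C') ->
  s * s * C <= s * s * C2 + s * s * ((2 * s - 1) * C') ->
  s.+1 * C1 + s * s * C2 + 3 <= Fs ->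
  (s * (s + 1) + 1) * C < Fs + s * (2 * s ^ 2 + 1) * C'.
Proof. move=> *; nia. Qed.

Lemma final_arith n k t Fs : 2 * k < n -> t + 3 <= k ->
  (k - t).+1 * 'C(n - (t + 2) - (k - t), k - (t + 2))
    + (k - t) * (k - t) * 'C(n - (t + 2) - (2 * (k - t) - 1), k - (t + 2)) + 3 <= Fs ->
  ((((k - t) * (k - t + 1) + 1) * 'C(n - t - 2, k - t - 2))%:Z
     - ((k - t) * (2 * (k - t) ^ 2 + 1) * 'C(n - t - 3, k - t - 3))%:Z
     < Fs%:Z)%R.
Proof.
move=> hn hk hF.
have eN : n - t - 2 = n - (t + 2) by lia.
have eR : k - t - 2 = k - (t + 2) by lia.
have eN1 : n - t - 3 = (n - (t + 2)).-1 by lia.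
have eR1 : k - t - 3 = (k - (t + 2)).-1 by lia.
have r0 : 0 < k - (t + 2) by lia.
have s3 : 2 < k - t by lia.
rewrite eN eR eN1 eR1.
move: hF.
set s := k - t; set N := n - (t + 2); set r := k - (t + 2).
move=> hF.
have h1 := bin_sub_bound N s r0.
have h2 := bin_sub_bound N (2 * s - 1) r0.
rewrite -/r in h1 h2.
rewrite ltrBlDr -PoszD ltz_nat.
have hA : (s + 1) * 'C(N, r) <= (s + 1) * 'C(N - s, r) + (s + 1) * (s * 'C(N.-1, r.-1)).
  by rewrite -mulnDr leq_mul2l h1 orbT.
have hB : s * s * 'C(N, r) <= s * s * 'C(N - (2 * s - 1), r) + s * s * ((2 * s - 1) * 'C(N.-1, r.-1)).
  by rewrite -mulnDr leq_mul2l h2 orbT.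
have := @lin_arith _ _ _ _ _ _ s3 hA hB hF.
by [].
Qed.

Theorem lemma2p3 (n k t : nat) (F : {set {set 'I_n}}) :
  2 * k < n -> t + 3 <= k ->
  maximal_tint k t F ->
  tau t F = t + 2 ->
  tau t (Tcov t F) = t ->
  #|Tcov t F| = (k - t) * (k - t + 1) + 1 ->
  is_typeI k t F /\
  ((((k - t) * (k - t + 1) + 1) * 'C(n - t - 2, k - t - 2))%:Z
     - ((k - t) * (2 * (k - t) ^ 2 + 1) * 'C(n - t - 3, k - t - 3))%:Z
     < #|F|%:Z)%R.
Proof.
move=> hn hk Hmax htau htauT hcard.
have [T0 [a [B [C [u [R [[cT0 cR t0 RT cB] [[cC aB aC dBC uC]
   [[dT G1F G2F G3F nG1] [nG2 nG3 F0mem EF]]]]]]]]]] :=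
  typeI_part hn hk Hmax htau htauT hcard.
split; last first.
  apply: final_arith => //.
  exact: (bound_part hn hk cT0 cB cC aB aC dBC uC dT G1F G2F G3F nG1 nG2 nG3 RT F0mem).
have nT : forall x, x \in a |: (B :|: C) -> x \notin T0.
  by move=> x xA; apply/negP => xT; rewrite (disjointFr dT xT) in xA.
have aT : a \notin T0 by apply: nT; rewrite setU11.
have BT : forall x, x \in B -> x \notin T0.
  by move=> x xB; apply: nT; rewrite !inE xB orbT.
have CT : forall x, x \in C -> x \notin T0.
  by move=> x xC; apply: nT; rewrite !inE xC !orbT.
have aR : a \notin R by apply: contra aT; apply: (subsetP RT).
have TA : T0 :&: (a |: R) = R.
  apply/setP => x; rewrite !inE; case: (eqVneq x a) => [->|_] /=.
    rewrite (negbTE aT); apply/esym/negbTE; apply: contra aT => aR'.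
    exact: (subsetP RT a aR').
  case xR: (x \in R); rewrite ?andbF ?andbT //; exact: (subsetP RT x xR).
exists T0, (a |: R), B, C, u.
split; first split => //.
- by rewrite cardsU1 aR cR add1n prednK.
- by rewrite TA cR subn1.
split; last by [].
split => //.
- apply/eqP; rewrite setI_eq0; apply: disjP => x xT.
  by rewrite in_setU => /orP[/BT|/CT]; rewrite xT.
- apply/eqP; rewrite setI_eq0; apply: disjP => x.
  rewrite in_setU1 => /orP[/eqP->|xR] xB; first by rewrite xB in aB.
  by have := BT x xB; rewrite (subsetP RT x xR).
- apply/eqP; rewrite setI_eq0; apply: disjP => x.
  rewrite in_setU1 => /orP[/eqP->|xR] xC; first by rewrite xC in aC.
  by have := CT x xC; rewrite (subsetP RT x xR).
- by apply/eqP; rewrite setI_eq0.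
Qed.
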